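(* Let $T_{\mathrm{Prog}}=(V,\mathit{Init},\mathit{TR})$ with $V=\{pc,x,z_1,z_2,y_1,y_2\}$ be the transition system defined as follows (locations are encoded as integers $\mathrm{start}=0$, $\mathrm{loop}_1=1$, $\mathrm{loop}_2=2$, $\mathrm{end}=3$): $\mathit{Init} := pc=\mathrm{start}\wedge x>0\wedge z_1=x\wedge z_2=2x\wedge y_1=0\wedge y_2=0$, and $\mathit{TR}$ is the disjunction of the following cases, where in each case every variable not mentioned keeps its value ($v'=v$): (1) $pc\in\{\mathrm{start},\mathrm{loop}_1\}\wedge z_1>0\wedge pc'=\mathrm{loop}_1\wedge z_1'=z_1-1\wedge y_1'=y_1+x$; (2) $pc\in\{\mathrm{start},\mathrm{loop}_1\}\wedge z_1\le 0\wedge pc'=\mathrm{loop}_2$; (3) $pc=\mathrm{loop}_2\wedge z_2>0\wedge pc'=\mathrm{loop}_2\wedge z_2'=z_2-1\wedge y_2'=y_2+x$; (4) $pc=\mathrm{loop}_2\wedge z_2\le 0\wedge pc'=\mathrm{end}$; (5) $pc=\mathrm{end}\wedge pc'=\mathrm{end}$. (This encodes the program which, on input $x>0$, computes $y_1=x^2$ by adding $x$ to $y_1$ exactly $x$ times, then computes $y_2=2x^2$ by adding $x$ to $y_2$ exactly $2x$ times, and then asserts $y_2=2y_1$.) Let $P := (pc=\mathrm{end})\to(y_2=2y_1)$. Then $T_{\mathrm{Prog}}\models P$, but there is no inductive invariant for $T_{\mathrm{Prog}}$ and $P$ that is a QFLIA formula over $V$.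
   Context: QFLIA (quantifier-free linear integer arithmetic) formulas are built from integer-valued variables, integer constants, addition, multiplication by integer constants, the relations $=,<,\le$, and Boolean connectives, with no quantifiers; all variables range over $\mathbb{Z}$. A transition system is a tuple $T=(V,\mathit{Init},\mathit{TR})$ where $V$ is a finite set of integer variables, $\mathit{Init}$ is a QFLIA formula over $V$, and $\mathit{TR}$ is a QFLIA formula over $V\uplus V'$, where $V'=\{v' : v\in V\}$ is a primed copy of $V$. A state is an assignment $V\to\mathbb{Z}$. The initial states are those satisfying $\mathit{Init}$. A pair of states $(s,t)$ is a transition if $\mathit{TR}$ holds when unprimed variables take their values from $s$ and primed variables from $t$. Reachable states are those reachable from an initial state by finitely many transitions. A safety property is a QFLIA formula $P$ over $V$. We write $T\models P$ if every reachable state satisfies $P$. An inductive invariant for $T$ and $P$ is a formula $I$ over $V$ such that: (i) $\mathit{Init}\to I$ is valid; (ii) $I\wedge \mathit{TR}\to I'$ is valid, where $I'$ is obtained from $I$ by replacing each $v\in V$ with $v'$; and (iii) $I\to P$ is valid. *)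

(* Defs.v *)
From Stdlib Require Import ZArith.
Open Scope Z_scope.

Inductive term (A : Type) : Type :=
| TConst : Z -> term A
| TVar : A -> term A
| TAdd : term A -> term A -> term A
| TMul : Z -> term A -> term A.

Inductive formula (A : Type) : Type :=
| FTrue : formula A
| FFalse : formula A
| FEq : term A -> term A -> formula A
| FLt : term A -> term A -> formula A
| FLe : term A -> term A -> formula A
| FNot : formula A -> formula A
| FAnd : formula A -> formula A -> formula A
| FOr : formula A -> formula A -> formula A.

Arguments TConst {A}. Arguments TVar {A}. Arguments TAdd {A}. Arguments TMul {A}.
Arguments FTrue {A}. Arguments FFalse {A}. Arguments FEq {A}. Arguments FLt {A}.
Arguments FLe {A}. Arguments FNot {A}. Arguments FAnd {A}. Arguments FOr {A}.

Definition FImp {A} (f g : formula A) : formula A := FOr (FNot f) g.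

Fixpoint eval_term {A} (s : A -> Z) (t : term A) : Z :=
  match t with
  | TConst c => c
  | TVar a => s a
  | TAdd t u => eval_term s t + eval_term s u
  | TMul c t => c * eval_term s t
  end.

Fixpoint holds {A} (s : A -> Z) (f : formula A) : Prop :=
  match f with
  | FTrue => True
  | FFalse => False
  | FEq t u => eval_term s t = eval_term s u
  | FLt t u => eval_term s t < eval_term s u
  | FLe t u => eval_term s t <= eval_term s u
  | FNot f => ~ holds s f
  | FAnd f g => holds s f /\ holds s g
  | FOr f g => holds s f \/ holds s g
  end.

(** * Transition systems: TR is a formula over V ⊎ V' (inl = unprimed, inr = primed) *)
Record transition_system (V : Type) : Type := mkTS {
  ts_Init : formula V;
  ts_TR : formula (V + V)
}.
Arguments mkTS {V}. Arguments ts_Init {V}. Arguments ts_TR {V}.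

Definition pair_state {V} (s t : V -> Z) : V + V -> Z :=
  fun v => match v with inl a => s a | inr a => t a end.

Definition is_transition {V} (T : transition_system V) (s t : V -> Z) : Prop :=
  holds (pair_state s t) (ts_TR T).

Inductive reachable {V} (T : transition_system V) : (V -> Z) -> Prop :=
| reach_init : forall s, holds s (ts_Init T) -> reachable T s
| reach_step : forall s t, reachable T s -> is_transition T s t -> reachable T t.

Definition models {V} (T : transition_system V) (P : formula V) : Prop :=
  forall s, reachable T s -> holds s P.

Fixpoint prime_term {V} (t : term V) : term (V + V) :=
  match t with
  | TConst c => TConst c
  | TVar a => TVar (inr a)
  | TAdd t u => TAdd (prime_term t) (prime_term u)
  | TMul c t => TMul c (prime_term t)
  end.
Fixpoint prime_formula {V} (f : formula V) : formula (V + V) :=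
  match f with
  | FTrue => FTrue | FFalse => FFalse
  | FEq t u => FEq (prime_term t) (prime_term u)
  | FLt t u => FLt (prime_term t) (prime_term u)
  | FLe t u => FLe (prime_term t) (prime_term u)
  | FNot f => FNot (prime_formula f)
  | FAnd f g => FAnd (prime_formula f) (prime_formula g)
  | FOr f g => FOr (prime_formula f) (prime_formula g)
  end.
Fixpoint unprime_term {V} (t : term V) : term (V + V) :=
  match t with
  | TConst c => TConst c
  | TVar a => TVar (inl a)
  | TAdd t u => TAdd (unprime_term t) (unprime_term u)
  | TMul c t => TMul c (unprime_term t)
  end.
Fixpoint unprime_formula {V} (f : formula V) : formula (V + V) :=
  match f with
  | FTrue => FTrue | FFalse => FFalse
  | FEq t u => FEq (unprime_term t) (unprime_term u)
  | FLt t u => FLt (unprime_term t) (unprime_term u)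
  | FLe t u => FLe (unprime_term t) (unprime_term u)
  | FNot f => FNot (unprime_formula f)
  | FAnd f g => FAnd (unprime_formula f) (unprime_formula g)
  | FOr f g => FOr (unprime_formula f) (unprime_formula g)
  end.

Definition valid {A} (f : formula A) : Prop := forall s : A -> Z, holds s f.

Definition inductive_invariant {V} (T : transition_system V) (P I : formula V) : Prop :=
  valid (FImp (ts_Init T) I) /\
  valid (FImp (FAnd (unprime_formula I) (ts_TR T)) (prime_formula I)) /\
  valid (FImp I P).

Inductive var : Type := pc | x | z1 | z2 | y1 | y2.

Definition v {A} (a : A) : term A := TVar a.
Definition c {A} (n : Z) : term A := TConst n.
Definition u (a : var) : term (var + var) := TVar (inl a).
Definition p (a : var) : term (var + var) := TVar (inr a).

(* locations: start = 0, loop1 = 1, loop2 = 2, end = 3 *)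
Definition Init_Prog : formula var :=
  FAnd (FEq (v pc) (c 0))
  (FAnd (FLt (c 0) (v x))
  (FAnd (FEq (v z1) (v x))
  (FAnd (FEq (v z2) (TMul 2 (v x)))
  (FAnd (FEq (v y1) (c 0))
        (FEq (v y2) (c 0)))))).

Definition keep (a : var) : formula (var + var) := FEq (p a) (u a).

Definition TR_Prog : formula (var + var) :=
  let pc01 := FOr (FEq (u pc) (c 0)) (FEq (u pc) (c 1)) in
  FOr
  (FAnd pc01 (FAnd (FLt (c 0) (u z1)) (FAnd (FEq (p pc) (c 1))
    (FAnd (FEq (p z1) (TAdd (u z1) (c (-1))))
    (FAnd (FEq (p y1) (TAdd (u y1) (u x)))
    (FAnd (keep x) (FAnd (keep z2) (keep y2))))))))
  (FOr
  (FAnd pc01 (FAnd (FLe (u z1) (c 0)) (FAnd (FEq (p pc) (c 2))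
    (FAnd (keep x) (FAnd (keep z1) (FAnd (keep z2) (FAnd (keep y1) (keep y2))))))))
  (FOr
  (FAnd (FEq (u pc) (c 2)) (FAnd (FLt (c 0) (u z2)) (FAnd (FEq (p pc) (c 2))
    (FAnd (FEq (p z2) (TAdd (u z2) (c (-1))))
    (FAnd (FEq (p y2) (TAdd (u y2) (u x)))
    (FAnd (keep x) (FAnd (keep z1) (keep y1))))))))
  (FOr
  (FAnd (FEq (u pc) (c 2)) (FAnd (FLe (u z2) (c 0)) (FAnd (FEq (p pc) (c 3))
    (FAnd (keep x) (FAnd (keep z1) (FAnd (keep z2) (FAnd (keep y1) (keep y2))))))))
  (FAnd (FEq (u pc) (c 3)) (FAnd (FEq (p pc) (c 3))
    (FAnd (keep x) (FAnd (keep z1) (FAnd (keep z2) (FAnd (keep y1) (keep y2)))))))))).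

Definition T_Prog : transition_system var := mkTS Init_Prog TR_Prog.

Definition P_Prog : formula var :=
  FImp (FEq (v pc) (c 3)) (FEq (v y2) (TMul 2 (v y1))).

(* Main.v *)
Require Import Defs.
From Stdlib Require Import ZArith Lia.

Definition mk (p0 X Z1 Z2 Y1 Y2 : Z) : var -> Z :=
  fun a => match a with pc => p0 | x => X | z1 => Z1 | z2 => Z2 | y1 => Y1 | y2 => Y2 end.
Definition st (X Y : Z) := mk 2 X 0 (2 * X) Y 0.

Ltac simp_core := cbn [holds eval_term ts_Init ts_TR pair_state T_Prog Init_Prog TR_Prog keep u p c v P_Prog FImp mk st prime_formula unprime_formula].
Tactic Notation "simp" := simp_core.
Tactic Notation "simp" "in" hyp(H) := cbn [holds eval_term ts_Init ts_TR pair_state T_Prog Init_Prog TR_Prog keep u p c v P_Prog FImp mk st prime_formula unprime_formula] in H.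

Definition Inv (s : var -> Z) : Prop :=
  s x > 0 /\ (
   (s pc = 0 /\ s z1 = s x /\ s y1 = 0 /\ s z2 = 2 * s x /\ s y2 = 0) \/
   (s pc = 1 /\ 0 <= s z1 /\ s y1 = s x * (s x - s z1) /\ s z2 = 2 * s x /\ s y2 = 0) \/
   (s pc = 2 /\ s z1 = 0 /\ s y1 = s x * s x /\ 0 <= s z2 /\ s y2 = s x * (2 * s x - s z2)) \/
   (s pc = 3 /\ s z2 = 0 /\ s y1 = s x * s x /\ s y2 = 2 * s x * s x)).

Lemma reach_inv s : reachable T_Prog s -> Inv s.
Proof.
  induction 1 as [s H | s t _ IH H].
  - simp in H. unfold Inv. lia.
  - unfold is_transition in H; simp in H. unfold Inv in *.
    destruct IH as [Hx IH].
    split; [destruct H as [H|[H|[H|[H|H]]]]; lia|].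
    destruct IH as [I|[I|[I|I]]]; destruct H as [H|[H|[H|[H|H]]]];
      (try (exfalso; lia)); intuition nia.
Qed.


Lemma unprime_term_ok (s t : var -> Z) (e : term var) :
  eval_term (pair_state s t) (unprime_term e) = eval_term s e.
Proof. induction e; simpl; congruence. Qed.
Lemma prime_term_ok (s t : var -> Z) (e : term var) :
  eval_term (pair_state s t) (prime_term e) = eval_term t e.
Proof. induction e; simpl; congruence. Qed.
Lemma unprime_ok (s t : var -> Z) (f : formula var) :
  holds (pair_state s t) (unprime_formula f) <-> holds s f.
Proof. induction f; simpl; rewrite ?unprime_term_ok; tauto. Qed.
Lemma prime_ok (s t : var -> Z) (f : formula var) :
  holds (pair_state s t) (prime_formula f) <-> holds t f.
Proof. induction f; simpl; rewrite ?prime_term_ok; tauto. Qed.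

Lemma closure I s t : inductive_invariant T_Prog P_Prog I ->
  holds s I -> is_transition T_Prog s t -> holds t I.
Proof.
  intros [_ [H2 _]] Hs Ht. specialize (H2 (pair_state s t)). simp in H2.
  rewrite unprime_ok, prime_ok in H2. unfold is_transition in Ht. simp in Ht. tauto.
Qed.

Lemma L1 I X Z2 Y2 : inductive_invariant T_Prog P_Prog I ->
  forall n Y p0, (p0 = 0 \/ p0 = 1) -> holds (mk p0 X (Z.of_nat n) Z2 Y Y2) I ->
  holds (mk 2 X 0 Z2 (Y + Z.of_nat n * X) Y2) I.
Proof.
  intros HI n. induction n as [|n IHn]; intros Y p0 Hp H.
  - replace (Y + Z.of_nat 0 * X) with Y by lia.
    eapply closure; [exact HI | exact H |].
    unfold is_transition; simp. right; left. lia.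
  - replace (Y + Z.of_nat (S n) * X) with ((Y + X) + Z.of_nat n * X) by lia.
    apply (IHn _ 1); [lia|].
    eapply closure; [exact HI | exact H |].
    unfold is_transition; simp. left. lia.
Qed.

Lemma L2 I X Z1 Y : inductive_invariant T_Prog P_Prog I ->
  forall n W, holds (mk 2 X Z1 (Z.of_nat n) Y W) I ->
  holds (mk 3 X Z1 0 Y (W + Z.of_nat n * X)) I.
Proof.
  intros HI n. induction n as [|n IHn]; intros W H.
  - replace (W + Z.of_nat 0 * X) with W by lia.
    eapply closure; [exact HI | exact H |].
    unfold is_transition; simp. right; right; right; left. lia.
  - replace (W + Z.of_nat (S n) * X) with ((W + X) + Z.of_nat n * X) by lia.
    apply IHn.
    eapply closure; [exact HI | exact H |].
    unfold is_transition; simp. right; right; left. lia.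
Qed.


Lemma term_lin (e : term var) : exists A B C, forall X Y,
  eval_term (st X Y) e = A + B * X + C * Y.
Proof.
  induction e as [k|a|e1 IH1 e2 IH2|k e IH].
  - exists k, 0, 0; intros; simp; lia.
  - destruct a; simp.
    + exists 2, 0, 0; intros; lia.
    + exists 0, 1, 0; intros; lia.
    + exists 0, 0, 0; intros; lia.
    + exists 0, 2, 0; intros; lia.
    + exists 0, 0, 1; intros; lia.
    + exists 0, 0, 0; intros; lia.
  - destruct IH1 as (A1&B1&C1&H1), IH2 as (A2&B2&C2&H2).
    exists (A1+A2), (B1+B2), (C1+C2); intros; simp; rewrite H1, H2; ring.
  - destruct IH as (A&B&C&H).
    exists (k*A), (k*B), (k*C); intros; simp; rewrite H; ring.
Qed.

Lemma sign A B C : exists N, forall X, N <= X -> forall D0 D1,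
  D0 = A + B * X + C * (X * X) -> D1 = A + B * X + C * (X * X + 1) ->
  (D0 = 0 <-> D1 = 0) /\ (D0 < 0 <-> D1 < 0).
Proof.
  exists (Z.abs A + Z.abs B + 1). intros X HX D0 D1 E0 E1.
  destruct (Z.lt_trichotomy C 0) as [HC|[HC|HC]].
  - assert (X * X >= X * (Z.abs A + Z.abs B + 1)) by nia.
    assert (C * (X * X) <= - (X * X)) by nia.
    assert (B * X <= Z.abs B * X) by nia.
    assert (D0 < 0) by nia. assert (D1 < 0) by nia. lia.
  - subst C. lia.
  - assert (X * X >= X * (Z.abs A + Z.abs B + 1)) by nia.
    assert (C * (X * X) >= X * X) by nia.
    assert (B * X >= - Z.abs B * X) by nia.
    assert (D0 > 0) by nia. assert (D1 > 0) by nia. lia.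
Qed.

Lemma atom (t w : term var) : exists N, forall X, N <= X ->
  (eval_term (st X (X*X)) t = eval_term (st X (X*X)) w <->
   eval_term (st X (X*X+1)) t = eval_term (st X (X*X+1)) w) /\
  (eval_term (st X (X*X)) t < eval_term (st X (X*X)) w <->
   eval_term (st X (X*X+1)) t < eval_term (st X (X*X+1)) w).
Proof.
  destruct (term_lin t) as (A1&B1&C1&H1), (term_lin w) as (A2&B2&C2&H2).
  destruct (sign (A1-A2) (B1-B2) (C1-C2)) as [N HN].
  exists N. intros X HX.
  specialize (HN X HX (eval_term (st X (X*X)) t - eval_term (st X (X*X)) w)
                      (eval_term (st X (X*X+1)) t - eval_term (st X (X*X+1)) w)).
  rewrite !H1, !H2 in HN. rewrite !H1, !H2.
  set (a := A1 + B1 * X + C1 * (X * X)) in *.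
  set (b := A2 + B2 * X + C2 * (X * X)) in *.
  set (a' := A1 + B1 * X + C1 * (X * X + 1)) in *.
  set (b' := A2 + B2 * X + C2 * (X * X + 1)) in *.
  assert (HN' : (a - b = 0 <-> a' - b' = 0) /\ (a - b < 0 <-> a' - b' < 0)).
  { apply HN; unfold a, b, a', b'; ring. }
  clearbody a b a' b'. lia.
Qed.

Lemma formula_same (f : formula var) : exists N, forall X, N <= X ->
  (holds (st X (X*X)) f <-> holds (st X (X*X+1)) f).
Proof.
  induction f as [| |t w|t w|t w|f IH|f IHf g IHg|f IHf g IHg].
  - exists 0; simp; tauto.
  - exists 0; simp; tauto.
  - destruct (atom t w) as [N HN]; exists N; intros X HX; simp;
      specialize (HN X HX); lia.
  - destruct (atom t w) as [N HN]; exists N; intros X HX; simp;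
      specialize (HN X HX); lia.
  - destruct (atom t w) as [N HN]; exists N; intros X HX; simp;
      specialize (HN X HX); lia.
  - destruct IH as [N HN]; exists N; intros X HX; simp; specialize (HN X HX); tauto.
  - destruct IHf as [N HN], IHg as [M HM]; exists (Z.max N M); intros X HX; simp;
      specialize (HN X ltac:(lia)); specialize (HM X ltac:(lia)); tauto.
  - destruct IHf as [N HN], IHg as [M HM]; exists (Z.max N M); intros X HX; simp;
      specialize (HN X ltac:(lia)); specialize (HM X ltac:(lia)); tauto.
Qed.

Theorem mainTheorem2 :
  models T_Prog P_Prog /\
  ~ (exists I : formula var, inductive_invariant T_Prog P_Prog I).
Proof.
  split.
  - intros s Hs. apply reach_inv in Hs. unfold Inv in Hs. simp.
    destruct (Z.eq_dec (s pc) 3); [right|left]; nia.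
  - intros [I HI].
    destruct (formula_same I) as [N HN].
    set (X := Z.max N 1).
    assert (H0 : holds (mk 0 X (Z.of_nat (Z.to_nat X)) (2 * X) 0 0) I).
    { destruct HI as [Hi _]. specialize (Hi (mk 0 X (Z.of_nat (Z.to_nat X)) (2 * X) 0 0)).
      simp in Hi. rewrite Z2Nat.id in Hi by lia. rewrite Z2Nat.id by lia.
      destruct Hi as [Hi|Hi]; [exfalso; apply Hi; lia | exact Hi]. }
    apply (L1 I X (2*X) 0 HI _ _ 0 (or_introl eq_refl)) in H0.
    rewrite Z2Nat.id in H0 by lia.
    replace (0 + X * X) with (X * X) in H0 by lia.
    apply (HN X ltac:(lia)) in H0. unfold st in H0.
    replace (2 * X) with (Z.of_nat (Z.to_nat (2 * X))) in H0 by (rewrite Z2Nat.id; lia).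
    apply (L2 I X 0 (X*X+1) HI) in H0.
    rewrite Z2Nat.id in H0 by lia.
    destruct HI as [_ [_ Hp]]. specialize (Hp (mk 3 X 0 0 (X * X + 1) (0 + 2 * X * X))).
    simp in Hp. destruct Hp as [Hp|[Hp|Hp]]; [contradiction|lia|nia].
Qed.
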